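(* Let $\alpha,\beta$ be relatively prime positive integers, let $n$ be a positive integer with $s=s(n)>2$, and let $(b,a)$ be an $n$-good pair. Then: (a) $a-\alpha b-\ell g_s$ is not a positive multiple of $\beta$ for any integer $\ell\ge0$; (b) a pair $(b',a')$ is $n$-good if and only if there exists $k\in\mathbb{Z}$ such that $a'=a+k\beta g_{s-2}\ge1$ and $b'=b-kg_{s-1}\ge1$; (c) with $a',b',k$ as in (b), $w_{s+1}(b',a')-w_{s+1}(b,a)=k(-\beta)^{s-1}$.
   Context: The $(\alpha,\beta)$-walk $w_k(a_1,a_2)$ for positive integers $a_1,a_2$ is given by $w_1=a_1$, $w_2=a_2$, $w_{k+2}=\alpha w_{k+1}+\beta w_k$ ($k\ge1$). For a positive integer $n$, $s(n;a_1,a_2)$ is the (largest) index $s$ with $w_s(a_1,a_2)=n$ ($-\infty$ if none), and $s(n)=\max_{a_1,a_2\ge1}s(n;a_1,a_2)$. A pair $(a_1,a_2)$ with $a_1,a_2\ge1$ is $n$-good if $s(n;a_1,a_2)=s(n)$. The sequence $g_k$: $g_1=1$, $g_2=\alpha$, $g_{k+2}=\alpha g_{k+1}+\beta g_k$ for $k\ge1$. *)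

(* Defs.v *)
From mathcomp Require Import all_boot all_order all_algebra.
Set Implicit Arguments. Unset Strict Implicit. Unset Printing Implicit Defensive.
Import Order.TTheory GRing.Theory Num.Theory.

(* (alpha,beta)-walk. [wpair al be a1 a2 k] = (w_{k+1}, w_{k+2}). *)
Fixpoint wpair (al be a1 a2 k : nat) : nat * nat :=
  match k with
  | 0 => (a1, a2)
  | k'.+1 => let p := wpair al be a1 a2 k' in (p.2, al * p.2 + be * p.1)
  end.

(* w_k(a1,a2), indices k >= 1 (w 1 = a1, w 2 = a2,
   w (k+2) = al * w (k+1) + be * w k).  The value at k = 0 is a dummy. *)
Definition w (al be a1 a2 k : nat) : nat := (wpair al be a1 a2 k.-1).1.

Definition g (al be k : nat) : nat := w al be 1 al k.

(* "s is the largest index (>= 1) with w_s(a1,a2) = n", i.e. s(n;a1,a2) = s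
   (s(n;a1,a2) = -oo corresponds to no s satisfying this). *)
Definition sidx (al be n a1 a2 s : nat) : Prop :=
  1 <= s /\ w al be a1 a2 s = n /\
  forall k, 1 <= k -> w al be a1 a2 k = n -> k <= s.

Definition s_of (al be n s : nat) : Prop :=
  (exists a1 a2, 1 <= a1 /\ 1 <= a2 /\ sidx al be n a1 a2 s) /\
  (forall a1 a2 t, 1 <= a1 -> 1 <= a2 -> sidx al be n a1 a2 t -> t <= s).

Definition good (al be n s a1 a2 : nat) : Prop :=
  1 <= a1 /\ 1 <= a2 /\ sidx al be n a1 a2 s.

(* Main.v *)
Require Import Defs.
From mathcomp Require Import all_boot all_order all_algebra.
From mathcomp Require Import zify ring.
Import Order.TTheory GRing.Theory Num.Theory.
Import Order.TTheory GRing.Theory Num.Theory.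
Lemma wS3 al be a1 a2 k : w al be a1 a2 k.+3 = al * w al be a1 a2 k.+2 + be * w al be a1 a2 k.+1.
Proof. by []. Qed.

Definition G_ al be k := w al be 0 1 k.+1.
Fact G_key : unit. Proof. by []. Qed.
Definition G := locked_with G_key G_.

Lemma G0 al be : G al be 0 = 0. Proof. by rewrite /G unlock. Qed.
Lemma G1 al be : G al be 1 = 1. Proof. by rewrite /G unlock. Qed.
Lemma GSS al be k : G al be k.+2 = al * G al be k.+1 + be * G al be k.
Proof. by rewrite /G unlock /G_ wS3. Qed.

Lemma g_G al be k : 0 < k -> g al be k = G al be k.
Proof.
have H : forall k, g al be k.+1 = G al be k.+1 /\ g al be k.+2 = G al be k.+2.
  elim=> [|m [IH1 IH2]].
    by rewrite GSS G1 G0 muln1 muln0 addn0.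
  split => //. by rewrite /g wS3 -/(g al be m.+2) -/(g al be m.+1) IH1 IH2 (GSS _ _ m.+1).
by case: k => // k _; case: (H k).
Qed.

Lemma w_G al be b a j : w al be b a j.+2 = be * b * G al be j + a * G al be j.+1.
Proof.
have H : forall j, w al be b a j.+2 = be * b * G al be j + a * G al be j.+1 /\
   w al be b a j.+3 = be * b * G al be j.+1 + a * G al be j.+2.
  elim=> [|m [IH1 IH2]].
    split; first by rewrite G0 G1 muln0 muln1.
    by rewrite wS3 GSS G0 G1; simpl; ring.
  split => //. by rewrite wS3 IH1 IH2 !GSS; ring.
by case: (H j).
Qed.

Lemma G_pos al be k : 0 < al -> 0 < G al be k.+1.
Proof.
move=> hal; have H : forall k, 0 < G al be k.+1 /\ 0 < G al be k.+2.
  elim=> [|m [IH1 IH2]]; first by rewrite GSS G1 G0; split => //; lia.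
  by split => //; rewrite GSS; nia.
by case: (H k).
Qed.

Lemma G_coprime al be k : coprime al be ->
  coprime (G al be k.+1) be /\ coprime (G al be k.+1) (G al be k.+2).
Proof.
move=> hc; elim: k => [|k [IH1 IH2]].
  by rewrite GSS G1 G0 muln1 muln0 addn0 /coprime gcd1n gcd1n.
have C1 : coprime (G al be k.+2) be.
  rewrite coprime_sym GSS /coprime addnC (mulnC be) gcdnMDl -/(coprime _ _) coprimeMr.
  by rewrite coprime_sym hc coprime_sym IH1.
split => //.
rewrite (GSS _ _ k.+1) /coprime gcdnMDl -/(coprime _ _) coprimeMr C1.
by rewrite coprime_sym IH2.
Qed.

Lemma w_pos al be a1 a2 : 0 < al -> 0 < be -> 0 < a1 -> 0 < a2 ->
  forall k, 0 < w al be a1 a2 k.+1 /\ w al be a1 a2 k.+2 < w al be a1 a2 k.+3.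
Proof.
move=> hal hbe h1 h2.
have H : forall k, 0 < w al be a1 a2 k.+1 /\ 0 < w al be a1 a2 k.+2.
  elim=> [|m [IH1 IH2]]; first by split.
  by split => //; rewrite wS3; nia.
move=> k; split; first by case: (H k).
case: (H k) => A B; rewrite wS3; nia.
Qed.

Lemma w_mono al be a1 a2 i j : 0 < al -> 0 < be -> 0 < a1 -> 0 < a2 -> i < j ->
  w al be a1 a2 i.+2 < w al be a1 a2 j.+2.
Proof.
move=> hal hbe h1 h2 hij.
move: hij; elim: j => // j IH; rewrite ltnS leq_eqVlt => /orP[/eqP->|/IH h].
  by case: (w_pos _ _ _ _ hal hbe h1 h2 j).
by apply: (ltn_trans h); case: (w_pos _ _ _ _ hal hbe h1 h2 j).
Qed.

Lemma sidx_at al be a1 a2 s : 0 < al -> 0 < be -> 0 < a1 -> 0 < a2 -> 1 < s ->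
  sidx al be (w al be a1 a2 s) a1 a2 s.
Proof.
move=> hal hbe h1 h2 hs.
have [s' ->] : exists s', s = s'.+2 by exists s.-2; lia.
split => //; split => // k hk hw.
case: k hk hw => // [[|k]] // _ hw.
rewrite leqNgt; apply/negP => lt.
rewrite ltnS ltnS in lt.
have := w_mono _ _ _ _ _ _ hal hbe h1 h2 lt; rewrite hw ltnn //.
Qed.

Local Open Scope ring_scope.

Lemma cassini al be j : (G al be j.+2)%:Z * (G al be j)%:Z - (G al be j.+1)%:Z ^+ 2 = - (- be%:Z) ^+ j.
Proof.
elim: j => [|j IH]; first by rewrite G0 G1 expr0 mulr0 expr1n sub0r.
rewrite [(- _) ^+ _.+1]exprS.
have -> : (- be%:Z) ^+ j = - ((G al be j.+2)%:Z * (G al be j)%:Z - (G al be j.+1)%:Z ^+ 2) by rewrite IH opprK.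
rewrite (GSS _ _ j.+1) (GSS _ _ j) !PoszD !PoszM. ring.
Qed.

Lemma natZ (x y : nat) : x%:Z = y%:Z -> x = y.
Proof. by move/eqP; rewrite eqz_nat => /eqP. Qed.

Theorem lemma2p4 (al be n s b a : nat) :
  (0 < al)%N -> (0 < be)%N -> coprime al be -> (0 < n)%N ->
  s_of al be n s -> (2 < s)%N -> good al be n s b a ->
  (* (a) *)
  (forall l : nat, ~ (exists m : nat, (0 < m)%N /\
      (a%:Z - (al * b)%:Z - (l * g al be s)%:Z = (be * m)%:Z))) /\
  (* (b) *)
  (forall b' a' : nat, good al be n s b' a' <->
     exists k : int,
       a'%:Z = a%:Z + k * be%:Z * (g al be (s - 2))%:Z /\ (1 <= a')%N /\
       b'%:Z = b%:Z - k * (g al be (s - 1))%:Z /\ (1 <= b')%N) /\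
  (* (c) *)
  (forall (b' a' : nat) (k : int),
     a'%:Z = a%:Z + k * be%:Z * (g al be (s - 2))%:Z -> (1 <= a')%N ->
     b'%:Z = b%:Z - k * (g al be (s - 1))%:Z -> (1 <= b')%N ->
     (w al be b' a' s.+1)%:Z - (w al be b a s.+1)%:Z
       = k * (- be%:Z) ^+ (s - 1)).
Proof.
move=> hal hbe hco _ [_ smax] hs [hb [ha [_ [hwn _]]]].
have [i ei] : exists i, s = i.+3 by exists (s - 3)%N; lia.
subst s.
have -> : (i.+3 - 2 = i.+1)%N by lia.
have -> : (i.+3 - 1 = i.+2)%N by lia.
rewrite !g_G //.
have hn : n = (be * b * G al be i.+1 + a * G al be i.+2)%N by rewrite -hwn w_G.
have G1p := G_pos al be i hal.
have G2p := G_pos al be i.+1 hal.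
split; [|split].
- move=> l [m [hm eq]].
  have E : w al be m (b + l * G al be i.+2) i.+4 = n.
    apply: natZ; rewrite w_G hn !PoszD !PoszM.
    have G3 : (G al be i.+3)%:Z = al%:Z * (G al be i.+2)%:Z + be%:Z * (G al be i.+1)%:Z
      by rewrite GSS PoszD !PoszM.
    move: eq; rewrite !PoszM => eq.
    have -> : a%:Z = be%:Z * m%:Z + al%:Z * b%:Z + l%:Z * (G al be i.+3)%:Z
      by rewrite -eq; ring.
    rewrite !PoszD !PoszM G3; ring.
  have hb2 : (0 < b + l * G al be i.+2)%N by lia.
  have := smax m (b + l * G al be i.+2) i.+4 hm hb2.
  rewrite -E => /(_ (sidx_at al be m (b + l * G al be i.+2)%N i.+4 hal hbe hm hb2 isT)).
  by rewrite ltnn.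
- move=> b' a'; split.
  + move=> [hb' [ha' [_ [hwn' _]]]].
    have E : (be * b' * G al be i.+1 + a' * G al be i.+2)%N = (be * b * G al be i.+1 + a * G al be i.+2)%N
      by rewrite -w_G hwn' hn.
    have EZ := congr1 Posz E.
    rewrite !PoszD !PoszM in EZ.
    have cop : coprime (G al be i.+2) (be * G al be i.+1).
      rewrite coprimeMr; case: (G_coprime al be i.+1 hco) => -> _.
      by case: (G_coprime al be i hco) => _; rewrite coprime_sym.
    have copz : coprimez (G al be i.+2)%:Z (be * G al be i.+1)%:Z by rewrite coprimezE.
    have dv : ((G al be i.+2)%:Z %| (be * G al be i.+1)%:Z * (b%:Z - b'%:Z))%Z.
      apply/dvdzP; exists (a'%:Z - a%:Z); rewrite PoszM.
      apply/eqP; rewrite -subr_eq0; apply/eqP.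
      have -> : 0 = (be%:Z * b%:Z * (G al be i.+1)%:Z + a%:Z * (G al be i.+2)%:Z) -
        (be%:Z * b'%:Z * (G al be i.+1)%:Z + a'%:Z * (G al be i.+2)%:Z) by rewrite EZ subrr.
      ring.
    rewrite Gauss_dvdzr // in dv.
    case/dvdzP: dv => k hk.
    exists k; split; last split => //; last split => //.
    * have nz : (G al be i.+2)%:Z != 0 by rewrite eqz_nat; lia.
      apply/eqP; rewrite -subr_eq0; apply/eqP.
      apply: (mulIf nz); rewrite mul0r mulrBl.
      have -> : a'%:Z * (G al be i.+2)%:Z = (be%:Z * b%:Z * (G al be i.+1)%:Z + a%:Z * (G al be i.+2)%:Z) - be%:Z * b'%:Z * (G al be i.+1)%:Z
        by rewrite -EZ; ring.
      have -> : b'%:Z = b%:Z - k * (G al be i.+2)%:Z by rewrite -hk; ring.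
      ring.
    * by rewrite -hk; ring.
  + move=> [k [ea [ha' [eb hb']]]].
    have E : w al be b' a' i.+3 = n.
      apply: natZ; rewrite w_G hn !PoszD !PoszM ea eb; ring.
    split => //; split => //; rewrite -E; exact: sidx_at.
- move=> b' a' k ea ha' eb hb'.
  rewrite !w_G !PoszD !PoszM ea eb exprS.
  have -> : (- be%:Z) ^+ i.+1 = - ((G al be i.+3)%:Z * (G al be i.+1)%:Z - (G al be i.+2)%:Z ^+ 2)
    by rewrite cassini opprK.
  ring.
Qed.
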